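(* Let $S=\langle S^G,S^\Delta\rangle$ be a triplestore schema and let $r: A\rightarrow C$ be a rule (both as defined in the context). Then the schemas $\mathtt{score}(S,r)$ and $\mathtt{critical}(S,r)$ are semantically equivalent, i.e. $\mathbb{I}(\mathtt{score}(S,r))=\mathbb{I}(\mathtt{critical}(S,r))$.
   Context: **RDF basics.** $\mathbb{U}$ (URIs), $\mathbb{L}$ (literals) and $\mathbb{V}$ (variables) are pairwise disjoint infinite sets; constants are elements of $\mathbb{U}\cup\mathbb{L}$. - A triple is an element of $\mathbb{U}\times\mathbb{U}\times(\mathbb{U}\cup\mathbb{L})$, and a graph is a finite set of triples. - A triple pattern is an element of $(\mathbb{U}\cup\mathbb{V})\times(\mathbb{U}\cup\mathbb{V})\times(\mathbb{U}\cup\mathbb{L}\cup\mathbb{V})$, and a graph pattern is a finite set of triple patterns. For a triple (pattern) $t$ and $i\in\tau=\{1,2,3\}$, $t[i]$ is its $i$-th element (subject, predicate, object). $vars(P)$ and $const(P)$ denote the variables and constants occurring in $P$. - A mapping is a partial function $m:\mathbb{V}\rightharpoonup\mathbb{U}\cup\mathbb{L}$ with domain $dom(m)$. For a pattern $p$, $m(p)$ replaces each $?v\in dom(m)$ by $m(?v)$ and leaves other variables unchanged. - For a graph pattern $P$ and graph $G$, $[\![P]\!]_G$ is the set of mappings $m$ with $dom(m)=vars(P)$ and $m(P)\subseteq G$. **Rules.** A rule $r:A\rightarrow C$ consists of graph patterns $A$ (antecedent) and $C$ (consequent) with $vars(C)\subseteq vars(A)$, where each variable occurs at most once in $C$. **Schemas.**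 A triplestore schema is a pair $S=\langle S^G,S^\Delta\rangle$ where: - $S^G$ is a finite set of triple patterns in which each variable occurs at most once (across and within triples); - $S^\Delta\subseteq vars(S^G)$ (the no-literal set) contains every variable occurring in subject or predicate position in $S^G$. A triple pattern $t^S$ models a triple $t$ (w.r.t. $S^\Delta$) if there is a mapping $\mu$ with $\mu(t^S)=t$ that binds no variable of $S^\Delta$ to a literal. The same definition is used when $t$ contains the special URI $\lambda$ below. A graph $I$ is an instance of $S$ if every triple of $I$ is modelled by some $t^S\in S^G$. $\mathbb{I}(S)$ denotes the set of instances of $S$. **Canonical graphs.** Fix a fresh URI $\lambda$ not occurring in $S^G$, $A$ or $C$, and let $K=const(S^G)\cup const(A)\cup\{\lambda\}$. - The sandbox graph $\mathbb{S}(S)$ consists of, for each $t^S\in S^G$, the triple obtained by replacing every variable in $t^S$ by $\lambda$. - The critical instance $\mathbb{C}(S,r)$ is the set of all triples $t$ such that, for some $t^S\in S^G$ and every $i\in\tau$, the following holds. If $t^S[i]$ is a constant, then $t[i]=t^S[i]$. If $t^S[i]$ is a variable, then $t[i]=c$ for some $c\in K$ such that either $c$ is a URI, or ($i=3$ and $t^S[3]\notin S^\Delta$). **Rewriting.** For a triple pattern $t$, its rewritings are the (up to 8) triple patterns $t'$ with $t'[i]\in\{t[i],\lambda\}$ for each $i$. $\mathbb{Q}(A)$ is the set of graph patterns obtained by choosing one rewriting of each $t\in A$. $[\![\mathbb{Q}(A)]\!]_G$ is the set of mappings $m$ with $dom(m)=vars(A)$ such that $m(q)\subseteq G$ for some $q\in\mathbb{Q}(A)$.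 **Common post-processing.** Given a canonical graph $G$ and a candidate mapping set $M$, define the output schema $S'$ as follows. Initialise $S'^G=S^G$ and $S'^\Delta=S^\Delta$. Then, for each $m\in M$: 1. Let $\Delta^m$ be the set of variables occurring in subject or predicate position in some triple of $A$ or $C$. 2. For each $t_A\in A$, let $R(t_A)$ be the set of ''admissible rewritings'' $t_q$ of $t_A$ with $m(t_q)\in G$. Let $T(t_A)$ be the set of $t^S\in S^G$ that model $m(t_q)$ for some $t_q\in R(t_A)$. - (a) If $t_A[3]$ is a literal $l$, or a variable with $m(t_A[3])=l\in\mathbb{L}$, and no $t^S\in T(t_A)$ has $t^S[3]=l$ or $t^S[3]\in vars(S^G)\setminus S^\Delta$, then discard $m$. - (b) If $t_A[3]$ is a variable with $m(t_A[3])=\lambda$ and no $t^S\in T(t_A)$ has $t^S[3]\in vars(S^G)\setminus S^\Delta$, then add $t_A[3]$ to $\Delta^m$. 3. Discard $m$ if it binds some variable of $\Delta^m$ to a literal. 4. If $m$ is not discarded, let $s^m$ be the substitution that maps each $?v$ with $m(?v)\neq\lambda$ to $m(?v)$, and each $?v$ with $m(?v)=\lambda$ to a fresh variable $?v^*$ (new for each $m$ and not used elsewhere). Add $s^m(C)$ to $S'^G$, and add $s^m(\Delta^m)\cap vars(S'^G)$ to $S'^\Delta$. **The two schemas.** - $\mathtt{score}(S,r)$ is the output $S'$ with $G=\mathbb{S}(S)$, $M=[\![\mathbb{Q}(A)]\!]_{\mathbb{S}(S)}$, and admissible rewritings of $t_A$ being all its rewritings. - $\mathtt{critical}(S,r)$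 is the output $S'$ with $G=\mathbb{C}(S,r)$, $M=[\![A]\!]_{\mathbb{C}(S,r)}$, and $t_A$ as the only admissible rewriting of $t_A$. *)

(* Defs.v *)
From Stdlib Require Import List.
Import ListNotations.

Set Implicit Arguments.

Section RDF.

(* U = URIs, L = literals, V = variables (pairwise disjoint by construction) *)
Context {U L V : Type}.

Inductive term : Type :=
| TU : U -> term
| TL : L -> term
| TV : V -> term.

Record tp : Type := TP { t1 : term; t2 : term; t3 : term }.

Definition is_const (x : term) : Prop :=
  match x with TV _ => False | _ => True end.
Definition is_uri (x : term) : Prop :=
  match x with TU _ => True | _ => False end.
Definition is_lit (x : term) : Prop :=
  match x with TL _ => True | _ => False end.
Definition is_uri_or_var (x : term) : Prop :=
  match x with TL _ => False | _ => True end.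

Definition wf_triple (t : tp) : Prop :=
  is_uri (t1 t) /\ is_uri (t2 t) /\ is_const (t3 t).
Definition wf_pattern (t : tp) : Prop :=
  is_uri_or_var (t1 t) /\ is_uri_or_var (t2 t).

(* graphs and graph patterns are finite sets, represented by lists *)
Definition is_graph (G : list tp) : Prop := Forall wf_triple G.
Definition is_graph_pattern (P : list tp) : Prop := Forall wf_pattern P.

Definition occurs_in_tp (x : term) (t : tp) : Prop :=
  t1 t = x \/ t2 t = x \/ t3 t = x.

Definition in_vars (v : V) (P : list tp) : Prop :=
  exists t, In t P /\ occurs_in_tp (TV v) t.
Definition in_consts (c : term) (P : list tp) : Prop :=
  is_const c /\ exists t, In t P /\ occurs_in_tp c t.

Definition in_sp_vars (v : V) (P : list tp) : Prop :=
  exists t, In t P /\ (t1 t = TV v \/ t2 t = TV v).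

Definition comp (t : tp) (i : nat) : term :=
  match i with 1 => t1 t | 2 => t2 t | _ => t3 t end.
Definition vars_at_most_once (P : list tp) : Prop :=
  forall v t t' i i',
    In t P -> In t' P -> In i [1;2;3] -> In i' [1;2;3] ->
    comp t i = TV v -> comp t' i' = TV v -> t = t' /\ i = i'.

Definition mapping := V -> option term.
Definition is_mapping (m : mapping) : Prop :=
  forall v c, m v = Some c -> is_const c.
Definition in_dom (m : mapping) (v : V) : Prop := m v <> None.

Definition app_term (m : mapping) (x : term) : term :=
  match x with
  | TV v => match m v with Some c => c | None => TV v end
  | _ => x
  end.
Definition app_tp (m : mapping) (t : tp) : tp :=
  TP (app_term m (t1 t)) (app_term m (t2 t)) (app_term m (t3 t)).

(* [[P]]_G for a graph given as a set (predicate) of triples *)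
Definition eval (P : list tp) (G : tp -> Prop) (m : mapping) : Prop :=
  is_mapping m /\ (forall v, in_dom m v <-> in_vars v P) /\
  (forall t, In t P -> G (app_tp m t)).

Definition wf_rule (A C : list tp) : Prop :=
  is_graph_pattern A /\ is_graph_pattern C /\
  (forall v, in_vars v C -> in_vars v A) /\ vars_at_most_once C.

(* triplestore schemas <S^G, S^Delta> (input form: S^G finite list) *)
Definition wf_schema (SG : list tp) (SD : V -> Prop) : Prop :=
  is_graph_pattern SG /\ vars_at_most_once SG /\
  (forall v, SD v -> in_vars v SG) /\
  (forall v, in_sp_vars v SG -> SD v).

Definition models (SD : V -> Prop) (tS t : tp) : Prop :=
  exists mu : mapping, is_mapping mu /\ app_tp mu tS = t /\
    (forall v c, mu v = Some c -> SD v -> ~ is_lit c).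

(* instances of a (possibly infinite, predicate-given) schema *)
Definition instance (SG : tp -> Prop) (SD : V -> Prop) (I : list tp) : Prop :=
  is_graph I /\ forall t, In t I -> exists tS, SG tS /\ models SD tS t.

Section Canonical.
Variables (SG : list tp) (SD : V -> Prop) (A C : list tp) (lam : U).

Definition inK (c : term) : Prop :=
  c = TU lam \/ in_consts c SG \/ in_consts c A.

Definition lamify_term (x : term) : term :=
  match x with TV _ => TU lam | _ => x end.

Definition sandbox (t : tp) : Prop :=
  exists tS, In tS SG /\
    t = TP (lamify_term (t1 tS)) (lamify_term (t2 tS)) (lamify_term (t3 tS)).

(* condition on position i of the critical instance; [obj] says i = 3 *)
Definition crit_comp (obj : Prop) (x y : term) : Prop :=
  (is_const x /\ y = x) \/
  (exists v, x = TV v /\ inK y /\ (is_uri y \/ (obj /\ ~ SD v))).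

Definition critical_instance (t : tp) : Prop :=
  exists tS, In tS SG /\ crit_comp False (t1 tS) (t1 t) /\
    crit_comp False (t2 tS) (t2 t) /\ crit_comp True (t3 tS) (t3 t).

Definition rewrite_comp (x y : term) : Prop := y = x \/ y = TU lam.
Definition rewriting (t t' : tp) : Prop :=
  rewrite_comp (t1 t) (t1 t') /\ rewrite_comp (t2 t) (t2 t') /\
  rewrite_comp (t3 t) (t3 t').

(* [[Q(A)]]_G : q ranges over Q(A), one rewriting chosen for each t in A *)
Definition evalQ (G : tp -> Prop) (m : mapping) : Prop :=
  is_mapping m /\ (forall v, in_dom m v <-> in_vars v A) /\
  exists q, Forall2 rewriting A q /\ (forall t, In t q -> G (app_tp m t)).

Section Post.
(* G : canonical graph, M : candidate mappings,
   adm tA tq : tq is an admissible rewriting of tA,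
   fresh m v : the fresh variable ?v^* for mapping m *)
Variables (G : tp -> Prop) (M : mapping -> Prop) (adm : tp -> tp -> Prop)
          (fresh : mapping -> V -> V).

Definition Tset (m : mapping) (tA tS : tp) : Prop :=
  In tS SG /\ exists tq, adm tA tq /\ G (app_tp m tq) /\
    models SD tS (app_tp m tq).

Definition obj_free_var (tS : tp) : Prop :=
  exists w, t3 tS = TV w /\ in_vars w SG /\ ~ SD w.

Definition discard_a (m : mapping) : Prop :=
  exists tA, In tA A /\ exists l,
    (t3 tA = TL l \/ exists v, t3 tA = TV v /\ m v = Some (TL l)) /\
    ~ (exists tS, Tset m tA tS /\ (t3 tS = TL l \/ obj_free_var tS)).

(* Delta^m, including the additions of step 2(b) *)
Definition deltaM (m : mapping) (v : V) : Prop :=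
  in_sp_vars v A \/ in_sp_vars v C \/
  (exists tA, In tA A /\ t3 tA = TV v /\ m v = Some (TU lam) /\
     ~ (exists tS, Tset m tA tS /\ obj_free_var tS)).

Definition discard_3 (m : mapping) : Prop :=
  exists v l, deltaM m v /\ m v = Some (TL l).

Definition kept (m : mapping) : Prop :=
  M m /\ ~ discard_a m /\ ~ discard_3 m.

Definition subst_term (m : mapping) (x y : term) : Prop :=
  (is_const x /\ y = x) \/
  (exists v, x = TV v /\ m v = Some (TU lam) /\ y = TV (fresh m v)) \/
  (exists v c, x = TV v /\ m v = Some c /\ c <> TU lam /\ y = c).
Definition subst_tp (m : mapping) (t t' : tp) : Prop :=
  subst_term m (t1 t) (t1 t') /\ subst_term m (t2 t) (t2 t') /\
  subst_term m (t3 t) (t3 t').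

Definition outG (t : tp) : Prop :=
  In t SG \/ exists m, kept m /\ exists tC, In tC C /\ subst_tp m tC t.

Definition in_vars_outG (v : V) : Prop :=
  exists t, outG t /\ occurs_in_tp (TV v) t.

Definition outD (v : V) : Prop :=
  SD v \/ (exists m, kept m /\ exists w, deltaM m w /\
             subst_term m (TV w) (TV v) /\ in_vars_outG v).

End Post.

(* freshness conditions on the choice of the variables ?v^* for the
   candidate mappings M: new for each mapping m of M (mappings taken
   extensionally), distinct for distinct variables, and not used in S^G, A
   or C *)
Definition fresh_ok (M : mapping -> Prop) (fresh : mapping -> V -> V) : Prop :=
  (forall m m' v, M m -> M m' -> (forall x, m x = m' x) ->
     fresh m v = fresh m' v) /\
  (forall m m' v w, M m -> M m' -> in_vars v A -> in_vars w A ->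
     fresh m v = fresh m' w -> (forall x, m x = m' x) /\ v = w) /\
  (forall m v, M m -> ~ in_vars (fresh m v) SG /\ ~ in_vars (fresh m v) A /\
               ~ in_vars (fresh m v) C).

Definition lam_fresh : Prop :=
  ~ in_consts (TU lam) SG /\ ~ in_consts (TU lam) A /\ ~ in_consts (TU lam) C.

Definition score_G (fresh : mapping -> V -> V) : tp -> Prop :=
  outG sandbox (evalQ sandbox) rewriting fresh.
Definition score_D (fresh : mapping -> V -> V) : V -> Prop :=
  outD sandbox (evalQ sandbox) rewriting fresh.

Definition fresh_ok_score fresh := fresh_ok (evalQ sandbox) fresh.
Definition fresh_ok_critical fresh :=
  fresh_ok (eval A critical_instance) fresh.

Definition critical_G (fresh : mapping -> V -> V) : tp -> Prop :=
  outG critical_instance (eval A critical_instance) (fun tA tq => tq = tA) fresh.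
Definition critical_D (fresh : mapping -> V -> V) : V -> Prop :=
  outD critical_instance (eval A critical_instance) (fun tA tq => tq = tA) fresh.

End Canonical.

End RDF.

(* Main.v *)
Require Import Defs.
From Stdlib Require Import List Classical ClassicalEpsilon FunctionalExtensionality.
Import ListNotations.


Section Gen.
Context {U L V : Type}.

Definition I3 (i : nat) := i = 1 \/ i = 2 \/ i = 3.

Lemma I3_In i : In i [1;2;3] <-> I3 i.
Proof. unfold I3; simpl; intuition. Qed.

Lemma comp_app (m : @mapping U L V) t i : comp (app_tp m t) i = app_term m (comp t i).
Proof. destruct i as [|[|[|]]]; reflexivity. Qed.

Lemma tp_ext (t t' : @tp U L V) :
  (forall i, I3 i -> comp t i = comp t' i) -> t = t'.
Proof.
  intro H. destruct t, t'.
  pose proof (H 1 ltac:(unfold I3; auto)). pose proof (H 2 ltac:(unfold I3; auto)).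
  pose proof (H 3 ltac:(unfold I3; auto)). simpl in *. subst. reflexivity.
Qed.

Lemma occurs_comp (x : @term U L V) t : occurs_in_tp x t <-> exists i, I3 i /\ comp t i = x.
Proof.
  unfold occurs_in_tp, I3; split.
  - intros [H|[H|H]].
    + exists 1; auto.
    + exists 2; auto.
    + exists 3; auto.
  - intros [i [Hi H]]. destruct Hi as [Hi|[Hi|Hi]]; subst i; auto.
Qed.

Lemma models_pos (D : V -> Prop) (tS t : @tp U L V) :
  (forall i, I3 i -> is_const (comp tS i) -> comp t i = comp tS i) ->
  (forall i x, I3 i -> comp tS i = TV x -> is_const (comp t i) /\ (D x -> ~ is_lit (comp t i))) ->
  (forall i j x, I3 i -> I3 j -> comp tS i = TV x -> comp tS j = TV x -> comp t i = comp t j) ->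
  models D tS t.
Proof.
  intros Hc Hv Hcons.
  set (mu := fun x : V =>
    match excluded_middle_informative (exists i, I3 i /\ comp tS i = TV x) with
    | left e => let (i, _) := constructive_indefinite_description _ e in Some (comp t i)
    | right _ => None end).
  assert (Hmu : forall i x, I3 i -> comp tS i = TV x -> mu x = Some (comp t i)).
  { intros i x Hi Hx. unfold mu. destruct excluded_middle_informative as [e|n].
    - destruct constructive_indefinite_description as [j [Hj Hjx]].
      f_equal. eapply Hcons; eauto.
    - exfalso; apply n; eauto. }
  exists mu. split; [|split].
  - intros x c Hx. unfold mu in Hx. destruct excluded_middle_informative as [e|n]; [|discriminate].
    destruct constructive_indefinite_description as [j [Hj Hjx]]. injection Hx as <-.
    eapply Hv; eauto.
  - apply tp_ext. intros i Hi. rewrite comp_app.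
    destruct (comp tS i) eqn:E.
    + simpl. symmetry. rewrite <- E. apply Hc; auto. rewrite E. exact I.
    + simpl. symmetry. rewrite <- E. apply Hc; auto. rewrite E. exact I.
    + simpl. rewrite (Hmu i v Hi E). reflexivity.
  - intros x c Hx HD. unfold mu in Hx. destruct excluded_middle_informative as [e|n]; [|discriminate].
    destruct constructive_indefinite_description as [j [Hj Hjx]]. injection Hx as <-.
    eapply Hv; eauto.
Qed.

Lemma models_consts (tS t : @tp U L V) i mu :
  app_tp mu tS = t -> I3 i -> is_const (comp tS i) -> comp t i = comp tS i.
Proof.
  intros <- Hi Hc. rewrite comp_app. destruct (comp tS i); simpl in *; tauto.
Qed.

Lemma models_mono (D D' : V -> Prop) (tS t : @tp U L V) :
  models D tS t -> (forall x, occurs_in_tp (TV x) tS -> D' x -> D x) ->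
  (forall i, I3 i -> is_const (comp t i)) ->
  models D' tS t.
Proof.
  intros [mu [Hm [Ht HD]]] Hmono Hct.
  apply models_pos.
  - intros i Hi Hc. eapply (models_consts tS t i mu); eauto.
  - intros i x Hi Hx. split; auto. intro HD'.
    assert (Hocc : occurs_in_tp (TV x) tS) by (apply occurs_comp; eauto).
    subst t. rewrite comp_app, Hx. simpl.
    destruct (mu x) eqn:E.
    + eapply HD; eauto.
    + simpl. tauto.
  - intros i j x Hi Hj Hx Hy. subst t. rewrite !comp_app, Hx, Hy. reflexivity.
Qed.

Lemma Forall2_In_l {A B} (R : A -> B -> Prop) l1 l2 x :
  Forall2 R l1 l2 -> In x l1 -> exists y, In y l2 /\ R x y.
Proof.
  induction 1; simpl; [tauto|]. intros [<-|H1].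
  - exists y; auto.
  - destruct (IHForall2 H1) as [z [? ?]]; exists z; auto.
Qed.

Lemma build_Forall2 {A B} (R : A -> B -> Prop) (P : B -> Prop) l :
  (forall x, In x l -> exists y, R x y /\ P y) ->
  exists q, Forall2 R l q /\ forall y, In y q -> P y.
Proof.
  induction l as [|a l IH]; intros H.
  - exists []; split; [constructor|simpl; tauto].
  - destruct (H a (or_introl eq_refl)) as [y [Hy Py]].
    destruct IH as [q [Hq Pq]]. { intros; apply H; simpl; auto. }
    exists (y :: q); split; [constructor; auto|]. simpl; intros z [<-|Hz]; auto.
Qed.

End Gen.


Section Gen2.
Context {U L V : Type}.

Definition lamify_tp (lam : U) (t : @tp U L V) : tp :=
  TP (lamify_term lam (t1 t)) (lamify_term lam (t2 t)) (lamify_term lam (t3 t)).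

Lemma comp_lamify lam (t : @tp U L V) i : comp (lamify_tp lam t) i = lamify_term lam (comp t i).
Proof. destruct i as [|[|[|]]]; reflexivity. Qed.

Lemma models_lamify (D : V -> Prop) lam (tS : @tp U L V) : models D tS (lamify_tp lam tS).
Proof.
  apply models_pos.
  - intros i Hi Hc. rewrite comp_lamify. destruct (comp tS i); simpl in *; tauto.
  - intros i x Hi Hx. rewrite comp_lamify, Hx. simpl. split; auto.
  - intros i j x Hi Hj Hx Hy. rewrite !comp_lamify, Hx, Hy. reflexivity.
Qed.

Lemma subst_fun lam fresh (m : @mapping U L V) x y y' :
  subst_term lam fresh m x y -> subst_term lam fresh m x y' -> y = y'.
Proof.
  unfold subst_term.
  intros [[Hc ->]|[[v [-> [Hm ->]]]|[v [c [-> [Hm [Hne ->]]]]]]].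
  - intros [[Hc' ->]|[[v' [E _]]|[v' [c' [E _]]]]]; subst; simpl in *; tauto.
  - intros [[Hc' ->]|[[v' [E [Hm' ->]]]|[v' [c' [E [Hm' [Hne' ->]]]]]]];
      [simpl in *; tauto| |]; injection E as <-; congruence.
  - intros [[Hc' ->]|[[v' [E [Hm' ->]]]|[v' [c' [E [Hm' [Hne' ->]]]]]]];
      [simpl in *; tauto| |]; injection E as <-; congruence.
Qed.

Definition sub2 lam (fresh : mapping -> V -> V) (m : @mapping U L V) (x : term) : term :=
  match x with
  | TV v => match m v with
            | Some c => if excluded_middle_informative (c = TU lam) then TV (fresh m v) else c
            | None => TV v end
  | _ => x end.

Lemma sub2_ok lam fresh (m : @mapping U L V) x :
  (forall v, x = TV v -> m v <> None) -> subst_term lam fresh m x (sub2 lam fresh m x).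
Proof.
  intros H. unfold subst_term. destruct x as [u|l|v]; simpl.
  - left; split; simpl; auto.
  - left; split; simpl; auto.
  - destruct (m v) as [c|] eqn:E.
    + destruct excluded_middle_informative as [e|n].
      * right; left. exists v. subst. auto.
      * right; right. exists v, c. auto.
    + exfalso; eapply H; eauto.
Qed.

Definition sub2_tp lam fresh (m : @mapping U L V) (t : tp) : tp :=
  TP (sub2 lam fresh m (t1 t)) (sub2 lam fresh m (t2 t)) (sub2 lam fresh m (t3 t)).

Lemma comp_sub2 lam fresh (m : @mapping U L V) t i :
  comp (sub2_tp lam fresh m t) i = sub2 lam fresh m (comp t i).
Proof. destruct i as [|[|[|]]]; reflexivity. Qed.

Lemma subst_tp_comp lam fresh (m : @mapping U L V) t t' :
  subst_tp lam fresh m t t' <-> forall i, I3 i -> subst_term lam fresh m (comp t i) (comp t' i).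
Proof.
  unfold subst_tp, I3. split.
  - intros [? [? ?]] i [ -> | [ -> | -> ] ]; auto.
  - intros H. repeat split; [apply (H 1)|apply (H 2)|apply (H 3)]; auto.
Qed.

Lemma wf_comp (t : @tp U L V) i : wf_triple t -> I3 i -> is_const (comp t i).
Proof.
  intros [H1 [H2 H3]] [ -> | [ -> | -> ] ]; simpl; auto.
  - destruct (t1 t); simpl in *; tauto.
  - destruct (t2 t); simpl in *; tauto.
Qed.

Lemma sub2_var lam fresh (m : @mapping U L V) v x :
  is_mapping m -> m v <> None -> sub2 lam fresh m (TV v) = TV x ->
  m v = Some (TU lam) /\ x = fresh m v.
Proof.
  intros Hm Hd. simpl. destruct (m v) as [c|] eqn:Em; [|congruence].
  destruct excluded_middle_informative as [e|n].
  - intro H; injection H as <-; subst; auto.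
  - intro H; subst c. pose proof (Hm _ _ Em). simpl in *; tauto.
Qed.

Lemma transfer lam (fresh1 fresh2 : mapping -> V -> V) (m1 m2 : @mapping U L V)
  (D1 D2 : V -> Prop) tC t1' t :
  subst_tp lam fresh1 m1 tC t1' -> models D1 t1' t -> wf_triple t ->
  is_mapping m1 -> is_mapping m2 ->
  (forall v, occurs_in_tp (TV v) tC -> m2 v <> None) ->
  (forall v, occurs_in_tp (TV v) tC -> m2 v <> Some (TU lam) -> m1 v = m2 v) ->
  (forall v, occurs_in_tp (TV v) tC -> m2 v = Some (TU lam) -> D2 (fresh2 m2 v) ->
     (m1 v = Some (TU lam) /\ D1 (fresh1 m1 v)) \/
     (exists c, m1 v = Some c /\ c <> TU lam /\ ~ is_lit c)) ->
  (forall v w, occurs_in_tp (TV v) tC -> occurs_in_tp (TV w) tC ->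
     fresh2 m2 v = fresh2 m2 w -> v = w) ->
  exists t2, subst_tp lam fresh2 m2 tC t2 /\ models D2 t2 t.
Proof.
  intros Hs1 [mu [Hmu [Happ HD1]]] Hwf Hmap1 Hmap2 Hdom H1 H2 Hinj.
  assert (Hocc : forall i v, I3 i -> comp tC i = TV v -> occurs_in_tp (TV v) tC).
  { intros i v Hi Hv. apply occurs_comp; eauto. }
  pose proof (proj1 (subst_tp_comp _ _ _ _ _) Hs1) as Hs1x; clear Hs1; rename Hs1x into Hs1.
  assert (Ht : forall i, I3 i -> comp t i = app_term mu (comp t1' i)).
  { intros i Hi. subst t. apply comp_app. }
  exists (sub2_tp lam fresh2 m2 tC). split.
  - apply subst_tp_comp. intros i Hi. rewrite comp_sub2. apply sub2_ok.
    intros v Hv. apply Hdom. eauto.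
  - apply models_pos.
    + intros i Hi Hc. rewrite comp_sub2 in *. rewrite Ht by auto.
      specialize (Hs1 i Hi). destruct (comp tC i) as [u|l|v] eqn:E.
      * try rewrite E in Hs1. destruct Hs1 as [[_ ->]|[[v [Hv _]]|[v [c [Hv _]]]]]; try discriminate. reflexivity.
      * try rewrite E in Hs1. destruct Hs1 as [[_ ->]|[[v [Hv _]]|[v [c [Hv _]]]]]; try discriminate. reflexivity.
      * simpl in Hc |- *. destruct (m2 v) as [c|] eqn:Em.
        2:{ simpl in Hc; tauto. }
        destruct excluded_middle_informative as [e|n]; [simpl in Hc; tauto|].
        assert (Hm1 : m1 v = m2 v) by (apply H1; eauto; congruence).
        try rewrite E in Hs1.
        destruct Hs1 as [[Hc' _]|[[v' [Hv [Hm _]]]|[v' [c' [Hv [Hm [_ ->]]]]]]];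
          [simpl in Hc'; tauto| |].
        -- injection Hv as <-. congruence.
        -- injection Hv as <-. rewrite Hm1, Em in Hm. injection Hm as <-.
           destruct c; simpl in *; tauto.
    + intros i x Hi Hx. split; [apply wf_comp; auto|].
      intro HD2. rewrite comp_sub2 in Hx.
      destruct (comp tC i) as [u|l|v] eqn:E; simpl in Hx; try discriminate.
      destruct (m2 v) as [c|] eqn:Em; [|exfalso; eapply Hdom; eauto].
      destruct excluded_middle_informative as [e|n].
      2:{ subst c. pose proof (Hmap2 _ _ Em). simpl in *; tauto. }
      injection Hx as <-. subst c.
      specialize (Hs1 i Hi). try rewrite E in Hs1. rewrite Ht by auto.
      destruct (H2 v (Hocc i v Hi E) Em HD2) as [[Hm1 HDf]|[c [Hm1 [Hne Hnl]]]].
      * destruct Hs1 as [[Hc' _]|[[v' [Hv [Hm ->]]]|[v' [c' [Hv [Hm [Hne' _]]]]]]];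
          [simpl in Hc'; tauto| |injection Hv as <-; congruence].
        injection Hv as <-. simpl. destruct (mu (fresh1 m1 v)) as [c|] eqn:Emu.
        -- eapply HD1; eauto.
        -- simpl; tauto.
      * destruct Hs1 as [[Hc' _]|[[v' [Hv [Hm ->]]]|[v' [c' [Hv [Hm [Hne' ->]]]]]]];
          [simpl in Hc'; tauto|injection Hv as <-; congruence|].
        injection Hv as <-. rewrite Hm1 in Hm. injection Hm as <-.
        pose proof (Hmap1 _ _ Hm1). destruct c; simpl in *; tauto.
    + intros i j x Hi Hj Hx Hy. rewrite comp_sub2 in Hx, Hy.
      rewrite !Ht by auto.
      destruct (comp tC i) as [u|l|v] eqn:Ei; simpl in Hx; try discriminate.
      destruct (comp tC j) as [u'|l'|w] eqn:Ej; simpl in Hy; try discriminate.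
      assert (Hv : m2 v = Some (TU lam) /\ x = fresh2 m2 v) by (apply sub2_var; eauto).
      assert (Hw : m2 w = Some (TU lam) /\ x = fresh2 m2 w) by (apply sub2_var; eauto).
      assert (v = w). { apply Hinj; [eauto|eauto|]. destruct Hv as [_ Hv], Hw as [_ Hw]. congruence. } subst w.
      f_equal. eapply subst_fun; [apply Hs1; auto|]. rewrite Ei, <- Ej. apply Hs1; auto.
Qed.

End Gen2.


Section Main.
Context {U L V : Type}.
Variables (SG : list (@tp U L V)) (SD : V -> Prop) (A C : list (@tp U L V)) (lam : U)
  (fresh_s fresh_c : @mapping U L V -> V -> V).
Hypotheses (Hsch : wf_schema SG SD) (Hrule : wf_rule A C) (Hlam : lam_fresh SG A C lam)
  (Hfs : fresh_ok_score SG A C lam fresh_s) (Hfc : fresh_ok_critical SG SD A C lam fresh_c).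

Let SB := sandbox SG lam.
Let CI := critical_instance SG SD A lam.
Let MS := evalQ A lam SB.
Let MC := eval A CI.
Let admS := @rewriting U L V lam.
Let admC := fun tA tq : @tp U L V => tq = tA.

Lemma rewriting_comp (t t' : @tp U L V) :
  @rewriting U L V lam t t' <-> forall i, I3 i -> rewrite_comp lam (comp t i) (comp t' i).
Proof.
  unfold rewriting, I3. split.
  - intros [? [? ?]] i [ -> | [ -> | -> ] ]; auto.
  - intros H. repeat split; [apply (H 1)|apply (H 2)|apply (H 3)]; auto.
Qed.

Lemma const_in_consts (tS : @tp U L V) P i :
  In tS P -> I3 i -> is_const (comp tS i) -> in_consts (comp tS i) P.
Proof.
  intros H Hi Hc. split; auto. exists tS. split; auto. apply occurs_comp; eauto.
Qed.

Lemma lam_notSG c : in_consts c SG -> c <> TU lam.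
Proof. intros H ->. destruct Hlam as [Hl _]. exact (Hl H). Qed.

Lemma var_in_vars (t : @tp U L V) P i v :
  In t P -> I3 i -> comp t i = TV v -> in_vars v P.
Proof. intros H Hi Hv. exists t. split; auto. apply occurs_comp; eauto. Qed.

Lemma varsC_A v : in_vars v C -> in_vars v A.
Proof. destruct Hrule as [_ [_ [H _]]]. apply H. Qed.

Lemma SD_SG v : SD v -> in_vars v SG.
Proof. destruct Hsch as [_ [_ [H _]]]. apply H. Qed.

Lemma sp_SD v : in_sp_vars v SG -> SD v.
Proof. destruct Hsch as [_ [_ [_ H]]]. apply H. Qed.

Lemma SG_once (tS : @tp U L V) i j x :
  In tS SG -> I3 i -> I3 j -> comp tS i = TV x -> comp tS j = TV x -> i = j.
Proof.
  destruct Hsch as [_ [H _]]. intros Ht Hi Hj Hx Hy.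
  apply (H x tS tS i j Ht Ht); auto; apply I3_In; auto.
Qed.

Lemma A_pattern (tA : @tp U L V) : In tA A -> wf_pattern tA.
Proof. destruct Hrule as [H _]. intro. eapply Forall_forall; eauto. Qed.

Definition lr (s a : @term U L V) : term := match s with TV _ => TU lam | _ => a end.
Definition lr_tp (tS tA : @tp U L V) : tp :=
  TP (lr (t1 tS) (t1 tA)) (lr (t2 tS) (t2 tA)) (lr (t3 tS) (t3 tA)).
Lemma comp_lr tS tA i : comp (lr_tp tS tA) i = lr (comp tS i) (comp tA i).
Proof. destruct i as [|[|[|]]]; reflexivity. Qed.

Lemma sandbox_of (m : @mapping U L V) tS tA :
  In tS SG ->
  (forall i, I3 i -> is_const (comp tS i) -> app_term m (comp tA i) = comp tS i) ->
  exists tq, rewriting lam tA tq /\ SB (app_tp m tq) /\ models SD tS (app_tp m tq).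
Proof.
  intros HS H. exists (lr_tp tS tA).
  assert (E : app_tp m (lr_tp tS tA) = lamify_tp lam tS).
  { apply tp_ext. intros i Hi. rewrite comp_app, comp_lr, comp_lamify.
    destruct (comp tS i) eqn:E; simpl; auto; rewrite <- E; apply H; auto; rewrite E; exact I. }
  split; [|split].
  - apply rewriting_comp. intros i Hi. rewrite comp_lr. unfold rewrite_comp.
    destruct (comp tS i); simpl; auto.
  - rewrite E. exists tS. split; auto.
  - rewrite E. apply models_lamify.
Qed.

Lemma crit_const obj (x y : @term U L V) :
  crit_comp SG SD A lam obj x y -> is_const x -> y = x.
Proof.
  intros [[_ ->]|[v [-> _]]]; simpl; tauto.
Qed.

Lemma CI_comp t : CI t -> exists tS, In tS SG /\
  forall i, I3 i -> is_const (comp tS i) -> comp t i = comp tS i.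
Proof.
  intros [tS [HS [H1 [H2 H3]]]]. exists tS. split; auto.
  intros i [ -> | [ -> | -> ] ]; simpl; eapply crit_const; eauto.
Qed.

Lemma CI_intro t tS : In tS SG ->
  (forall i, I3 i -> crit_comp SG SD A lam (i = 3) (comp tS i) (comp t i)) -> CI t.
Proof.
  intros HS H. exists tS. split; auto.
  assert (conv : forall i x y, I3 i -> i <> 3 -> crit_comp SG SD A lam (i = 3) x y ->
     crit_comp SG SD A lam False x y).
  { intros i x y _ Hne [Hc|[v [Hv [HK Hu]]]]; [left; auto|right; exists v; repeat split; auto].
    destruct Hu as [Hu|[Hf _]]; [left; auto|contradiction]. }
  assert (conv3 : forall x y, crit_comp SG SD A lam (3 = 3) x y ->
     crit_comp SG SD A lam True x y).
  { intros x y [Hc|[v [Hv [HK Hu]]]]; [left; auto|right; exists v; repeat split; auto].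
    destruct Hu as [Hu|[_ Hf]]; [left; auto|right; auto]. }
  split; [|split].
  - apply (conv 1); [unfold I3; auto|discriminate|]. apply (H 1). unfold I3; auto.
  - apply (conv 2); [unfold I3; auto|discriminate|]. apply (H 2). unfold I3; auto.
  - apply conv3. apply (H 3). unfold I3; auto.
Qed.

Lemma deltaM_varsA G adm (m : @mapping U L V) w :
  deltaM SG SD A C lam G adm m w -> in_vars w A.
Proof.
  intros [[t [Ht Hw]]|[[t [Ht Hw]]|[tA [HA [H3 _]]]]].
  - exists t; split; auto. unfold occurs_in_tp; tauto.
  - apply varsC_A. exists t; split; auto. unfold occurs_in_tp; tauto.
  - exists tA; split; auto. unfold occurs_in_tp; auto.
Qed.

Lemma outD_SG G M adm fresh x :
  (forall m, M m -> is_mapping m /\ forall w, ~ in_vars (fresh m w) SG) ->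
  in_vars x SG -> outD SG SD A C lam G M adm fresh x -> SD x.
Proof.
  intros HM Hx [H|[m [[HMm _] [w [_ [Hs _]]]]]]; auto.
  exfalso. destruct (HM m HMm) as [Hmap Hf].
  destruct Hs as [[Hc _]|[[v [Hv [_ E]]]|[v [c [Hv [Hm [_ E]]]]]]].
  - simpl in Hc; auto.
  - injection Hv as <-. injection E as ->. eapply Hf; eauto.
  - subst c. pose proof (Hmap _ _ Hm). simpl in *; auto.
Qed.

Lemma outD_fresh G M adm fresh (m : @mapping U L V) v :
  fresh_ok SG A C M fresh -> (forall m, M m -> is_mapping m) -> M m -> in_vars v A ->
  outD SG SD A C lam G M adm fresh (fresh m v) -> deltaM SG SD A C lam G adm m v.
Proof.
  intros [_ [Hinj Hnew]] HMap HMm Hv [H|[m' [[HMm' _] [w [Hd [Hs _]]]]]].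
  - exfalso. apply SD_SG in H. exact (proj1 (Hnew m v HMm) H).
  - destruct Hs as [[Hc _]|[[v' [Hv' [_ E]]]|[v' [c [Hv' [Hm [_ E]]]]]]].
    + simpl in Hc; tauto.
    + injection Hv' as <-. injection E as E.
      destruct (Hinj m' m w v HMm' HMm (deltaM_varsA _ _ _ _ Hd) Hv (eq_sym E)) as [Hext <-].
      apply functional_extensionality in Hext. subst m'. exact Hd.
    + subst c. pose proof (HMap _ HMm' _ _ Hm). simpl in *; tauto.
Qed.

Lemma C2S_Tset (m : @mapping U L V) tA tS :
  Tset SG SD CI admC m tA tS -> Tset SG SD SB admS m tA tS.
Proof.
  intros [HS [tq [Htq [HG [mu [Hmu [Happ HD]]]]]]]. unfold admC in Htq. subst tq.
  split; auto.
  destruct (sandbox_of m tS tA HS) as [tq [Hr [Hsb Hmod]]].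
  - intros i Hi Hc. rewrite <- comp_app. eapply (models_consts tS); eauto.
  - exists tq. auto.
Qed.

Lemma C2S_eval (m : @mapping U L V) : MC m -> MS m.
Proof.
  intros [Hmap [Hdom HA]]. split; auto. split; auto.
  apply build_Forall2. intros tA HtA.
  destruct (CI_comp _ (HA tA HtA)) as [tS [HS Hc]].
  destruct (sandbox_of m tS tA HS) as [tq [Hr [Hsb _]]].
  - intros i Hi Hci. rewrite <- comp_app. auto.
  - exists tq; auto.
Qed.

Lemma C2S_delta (m : @mapping U L V) v :
  deltaM SG SD A C lam SB admS m v -> deltaM SG SD A C lam CI admC m v.
Proof.
  intros [H|[H|[tA [HA [H3 [Hm Hn]]]]]]; [left; auto|right; left; auto|].
  right; right. exists tA. repeat split; auto.
  intros [tS [HT Hf]]. apply Hn. exists tS. split; auto. apply C2S_Tset; auto.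
Qed.

Lemma C2S_kept (m : @mapping U L V) :
  kept SG SD A C lam CI MC admC m -> kept SG SD A C lam SB MS admS m.
Proof.
  intros [HM [Ha H3]]. split; [apply C2S_eval; auto|split].
  - intros [tA [HA [l [Hl Hn]]]]. apply Ha. exists tA. split; auto. exists l. split; auto.
    intros [tS [HT Hp]]. apply Hn. exists tS. split; auto. apply C2S_Tset; auto.
  - intros [v [l [Hd Hm]]]. apply H3. exists v, l. split; auto. apply C2S_delta; auto.
Qed.

Definition mp (m : @mapping U L V) : mapping := fun v =>
  if excluded_middle_informative (in_vars v A) then
    Some (match m v with
          | Some c => if excluded_middle_informative (inK SG A lam c) then c else TU lam
          | None => TU lam end)
  else None.

Lemma mp_spec m v : is_mapping m -> in_vars v A ->
  exists c, mp m v = Some c /\ is_const c /\ inK SG A lam c /\ (c = TU lam \/ m v = Some c).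
Proof.
  intros Hm Hv. unfold mp. destruct excluded_middle_informative as [_|n]; [|contradiction].
  destruct (m v) as [c|] eqn:E.
  - destruct excluded_middle_informative as [k|k].
    + exists c. repeat split; auto. apply (Hm v c E).
    + exists (TU lam). repeat split; simpl; auto. left; auto.
  - exists (TU lam). repeat split; simpl; auto. left; auto.
Qed.

Lemma mp_keep m v c : in_vars v A -> m v = Some c -> inK SG A lam c -> mp m v = Some c.
Proof.
  intros Hv E Hk. unfold mp. destruct excluded_middle_informative as [_|n]; [|contradiction].
  rewrite E. destruct excluded_middle_informative; [auto|contradiction].
Qed.

Lemma mp_none m v : mp m v = None -> ~ in_vars v A.
Proof. unfold mp. destruct excluded_middle_informative; [discriminate|auto]. Qed.

Lemma mp_nonlam m v c : mp m v = Some c -> c <> TU lam -> m v = Some c.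
Proof.
  unfold mp. destruct excluded_middle_informative; [|discriminate].
  destruct (m v) as [c'|] eqn:E; [destruct excluded_middle_informative|];
    intros H Hne; inversion H; subst; auto; contradiction.
Qed.

Lemma mp_lam m v : mp m v = Some (TU lam) ->
  m v = None \/ m v = Some (TU lam) \/ exists c, m v = Some c /\ ~ inK SG A lam c.
Proof.
  unfold mp. destruct excluded_middle_informative; [|discriminate].
  destruct (m v) as [c|]; auto.
  destruct excluded_middle_informative; intros H; [injection H as E; subst; eauto|eauto].
Qed.

Lemma inK_lam : inK SG A lam (TU lam).
Proof. left; auto. Qed.

Section Fixm.
Variable m : @mapping U L V.
Hypothesis Hmap : is_mapping m.
Hypothesis Hdom : forall v, in_vars v A -> m v <> None.
Hypothesis Hsp : forall v l, in_sp_vars v A -> m v <> Some (TL l).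

Lemma La tA tq i c : In tA A -> I3 i -> rewrite_comp lam (comp tA i) (comp tq i) ->
  app_term m (comp tq i) = c -> in_consts c SG -> app_term (mp m) (comp tA i) = c.
Proof.
  intros HA Hi [Hr|Hr] Happ Hc.
  - rewrite Hr in Happ. destruct (comp tA i) as [u|l|v] eqn:E; simpl in *; auto.
    destruct (m v) as [c'|] eqn:Em.
    + subst c'. apply var_in_vars with (P := A) in E; auto. rewrite (mp_keep m v c E Em); auto.
      right; left; auto.
    + subst c. destruct Hc as [[] _].
  - rewrite Hr in Happ. simpl in Happ. subst c. exfalso. eapply lam_notSG; eauto.
Qed.

Lemma Lb tA i : In tA A -> I3 i ->
  is_const (app_term (mp m) (comp tA i)) /\ inK SG A lam (app_term (mp m) (comp tA i)).
Proof.
  intros HA Hi. destruct (comp tA i) as [u|l|v] eqn:E.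
  - simpl. split; [exact I|]. right; right. rewrite <- E. apply const_in_consts; auto. rewrite E; exact I.
  - simpl. split; [exact I|]. right; right. rewrite <- E. apply const_in_consts; auto. rewrite E; exact I.
  - destruct (mp_spec m v Hmap (var_in_vars _ _ _ _ HA Hi E)) as [c [Hc [Hcc [HK _]]]].
    simpl. rewrite Hc. auto.
Qed.

Lemma Lc tA i : In tA A -> (i = 1 \/ i = 2) -> is_uri (app_term (mp m) (comp tA i)).
Proof.
  intros HA Hi. destruct (A_pattern tA HA) as [P1 P2].
  assert (Hsp' : forall v, comp tA i = TV v -> in_sp_vars v A).
  { intros v Hv. exists tA. split; auto. destruct Hi as [->| ->]; simpl in Hv; auto. }
  destruct (comp tA i) as [u|l|v] eqn:E.
  - simpl; auto.
  - exfalso. destruct Hi as [->| ->]; simpl in E; [rewrite E in P1|rewrite E in P2]; simpl in *; auto.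
  - assert (Hv : in_vars v A) by (apply (var_in_vars tA A i); auto; destruct Hi as [->| ->]; unfold I3; auto).
    destruct (mp_spec m v Hmap Hv) as [c [Hc [Hcc [HK [->|Hm]]]]]; simpl; rewrite Hc; simpl; auto.
    destruct c as [u|l|w]; simpl in *; auto.
    apply (Hsp v l); auto.
Qed.

Definition cond3 (tS tA : @tp U L V) : Prop :=
  is_const (t3 tS) \/ obj_free_var SG SD tS \/ ~ is_lit (app_term (mp m) (t3 tA)).

Lemma Lmain tA tS tq : In tA A -> In tS SG -> rewriting lam tA tq ->
  models SD tS (app_tp m tq) -> cond3 tS tA ->
  CI (app_tp (mp m) tA) /\ models SD tS (app_tp (mp m) tA).
Proof.
  intros HA HS Hr [mu [Hmu [Happ HD]]] Hc3.
  pose proof (proj1 (rewriting_comp _ _) Hr) as Hr0; clear Hr; rename Hr0 into Hr.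
  assert (Hconst : forall i, I3 i -> is_const (comp tS i) ->
             comp (app_tp (mp m) tA) i = comp tS i).
  { intros i Hi Hc. rewrite comp_app. eapply La; eauto.
    - rewrite <- comp_app. eapply (models_consts tS); eauto.
    - apply const_in_consts; auto. }
  assert (Hvar : forall i w, I3 i -> comp tS i = TV w ->
      is_const (comp (app_tp (mp m) tA) i) /\ inK SG A lam (comp (app_tp (mp m) tA) i) /\
      (is_uri (comp (app_tp (mp m) tA) i) \/ (i = 3 /\ ~ SD w))).
  { intros i w Hi Hw. rewrite comp_app. destruct (Lb tA i HA Hi) as [Hcc HK].
    split; auto. split; auto.
    destruct Hi as [ -> | [ -> | -> ] ].
    - left. apply Lc; auto.
    - left. apply Lc; auto.
    - simpl in Hw |- *. destruct Hc3 as [Hc|[[w' [E [_ Hn]]]|Hn]].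
      + rewrite Hw in Hc; destruct Hc.
      + rewrite Hw in E. injection E as <-. right; auto.
      + left. assert (Hcc2 : is_const (app_term (mp m) (t3 tA))) by exact Hcc. revert Hcc2 Hn. destruct (app_term (mp m) (t3 tA)); simpl; tauto. }
  split.
  - apply (CI_intro _ tS HS). intros i Hi. unfold crit_comp.
    destruct (comp tS i) as [u|l|w] eqn:E.
    + left. split; [exact I|]. rewrite <- E. apply Hconst; auto. rewrite E; exact I.
    + left. split; [exact I|]. rewrite <- E. apply Hconst; auto. rewrite E; exact I.
    + right. exists w. destruct (Hvar i w Hi E) as [_ [HK Hu]]. repeat split; auto.
  - apply models_pos.
    + intros i Hi Hc. apply Hconst; auto.
    + intros i x Hi Hx. destruct (Hvar i x Hi Hx) as [Hcc [_ Hu]]. split; auto.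
      intros HSD Hl. destruct Hu as [Hu|[_ Hn]]; [|contradiction].
      revert Hu Hl. destruct (comp (app_tp (mp m) tA) i); simpl; auto.
    + intros i j x Hi Hj Hx Hy. assert (i = j) by (eapply SG_once; eauto). subst; auto.
Qed.

End Fixm.

Lemma kept_facts m : kept SG SD A C lam SB MS admS m ->
  is_mapping m /\ (forall v, in_vars v A -> m v <> None) /\
  (forall v l, in_sp_vars v A -> m v <> Some (TL l)).
Proof.
  intros [[Hmap [Hdom _]] [_ H3]]. split; auto. split.
  - intros v Hv. apply Hdom; auto.
  - intros v l Hv E. apply H3. exists v, l. split; auto. left; auto.
Qed.

Lemma L_T m tA tS : kept SG SD A C lam SB MS admS m -> In tA A ->
  Tset SG SD SB admS m tA tS -> cond3 m tS tA -> Tset SG SD CI admC (mp m) tA tS.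
Proof.
  intros Hk HA [HS [tq [Hr [Hsb Hmod]]]] Hc.
  destruct (kept_facts m Hk) as [Hmap [Hdom Hsp]].
  destruct (Lmain m Hmap Hsp tA tS tq HA HS Hr Hmod Hc) as [HCI HM].
  split; auto. exists tA. unfold admC. auto.
Qed.

Lemma witness m tA l : kept SG SD A C lam SB MS admS m -> In tA A ->
  (t3 tA = TL l \/ exists v, t3 tA = TV v /\ m v = Some (TL l)) ->
  exists tS, Tset SG SD SB admS m tA tS /\ (t3 tS = TL l \/ obj_free_var SG SD tS).
Proof.
  intros [_ [Ha _]] HA Hl. apply NNPP. intro Hn. apply Ha. exists tA. split; auto.
  exists l. split; auto.
Qed.

Lemma lit_back m tA l : app_term (mp m) (t3 tA) = TL l ->
  t3 tA = TL l \/ exists v, t3 tA = TV v /\ m v = Some (TL l).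
Proof.
  destruct (t3 tA) as [u|l'|v]; simpl; try discriminate.
  - intros E; left; auto.
  - destruct (mp m v) as [c|] eqn:E; intro H; try discriminate. subst c.
    right. exists v. split; auto. apply mp_nonlam; auto. discriminate.
Qed.

Lemma S2C_eval m : kept SG SD A C lam SB MS admS m -> MC (mp m).
Proof.
  intros Hk. destruct (kept_facts m Hk) as [Hmap [Hdom Hsp]].
  pose proof Hk as Hk'. destruct Hk' as [[_ [_ [q [Hq Hqs]]]] _].
  split; [|split].
  - intros v c Hc. destruct (classic (in_vars v A)) as [Hv|Hv].
    + destruct (mp_spec m v Hmap Hv) as [c' [E [Hcc _]]]. congruence.
    + unfold mp in Hc. destruct excluded_middle_informative; [contradiction|discriminate].
  - intros v. unfold in_dom. split.
    + intros H. destruct (classic (in_vars v A)) as [Hv|Hv]; auto.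
      exfalso; apply H. unfold mp. destruct excluded_middle_informative; [contradiction|auto].
    + intros Hv. destruct (mp_spec m v Hmap Hv) as [c' [E _]]. congruence.
  - intros tA HA. destruct (Forall2_In_l _ _ _ _ Hq HA) as [tq [Htq Hr]].
    destruct (Hqs tq Htq) as [tS0 [HS0 E0]].
    assert (Hmod0 : models SD tS0 (app_tp m tq)) by (rewrite E0; apply models_lamify).
    destruct (classic (cond3 m tS0 tA)) as [Hc|Hc].
    + apply (Lmain m Hmap Hsp tA tS0 tq); auto.
    + assert (Hlit : exists l, app_term (mp m) (t3 tA) = TL l).
      { destruct (app_term (mp m) (t3 tA)) as [u|l|v] eqn:E.
        - exfalso; apply Hc; right; right; rewrite E; simpl; auto.
        - eauto.
        - exfalso; apply Hc; right; right; rewrite E; simpl; auto. }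
      destruct Hlit as [l Hl].
      destruct (witness m tA l Hk HA (lit_back m tA l Hl)) as [tS [HT Hp]].
      destruct HT as [HS [tq' [Hr' [_ Hmod]]]].
      apply (Lmain m Hmap Hsp tA tS tq'); auto.
      destruct Hp as [Hp|Hp]; [left; rewrite Hp; exact I|right; left; auto].
Qed.

Lemma S2C_kept m : kept SG SD A C lam SB MS admS m -> kept SG SD A C lam CI MC admC (mp m).
Proof.
  intros Hk. split; [apply S2C_eval; auto|split].
  - intros [tA [HA [l [Hl Hn]]]].
    assert (Hl' : t3 tA = TL l \/ exists v, t3 tA = TV v /\ m v = Some (TL l)).
    { destruct Hl as [Hl|[v [Hv Hm]]]; [left; auto|right; exists v; split; auto].
      apply mp_nonlam; auto; discriminate. }
    destruct (witness m tA l Hk HA Hl') as [tS [HT Hp]].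
    apply Hn. exists tS. split; auto. apply L_T; auto.
    destruct Hp as [Hp|Hp]; [left; rewrite Hp; exact I|right; left; auto].
  - intros [v [l [Hd Hm]]]. destruct Hk as [_ [_ H3]]. apply H3. exists v, l.
    assert (Hm' : m v = Some (TL l)) by (apply mp_nonlam; auto; discriminate).
    split; auto.
    destruct Hd as [Hd|[Hd|[tA [_ [_ [Hlm _]]]]]]; [left; auto|right; left; auto|congruence].
Qed.

Lemma S2C_H2 m v : kept SG SD A C lam SB MS admS m -> in_vars v A ->
  mp m v = Some (TU lam) -> deltaM SG SD A C lam CI admC (mp m) v ->
  (m v = Some (TU lam) /\ deltaM SG SD A C lam SB admS m v) \/
  (exists c, m v = Some c /\ c <> TU lam /\ ~ is_lit c).
Proof.
  intros Hk Hv Hmp Hd. destruct (kept_facts m Hk) as [Hmap [Hdom Hsp]].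
  destruct (mp_lam m v Hmp) as [Hn|[Hl|[c [Hc HK]]]].
  - exfalso; eapply Hdom; eauto.
  - left. split; auto.
    destruct Hd as [Hd|[Hd|[tA [HA [H3 [_ Hn]]]]]]; [left; auto|right; left; auto|].
    right; right. exists tA. repeat split; auto.
    intros [tS [HT Hf]]. apply Hn. exists tS. split; auto. apply L_T; auto.
    right; left; auto.
  - right. exists c. split; auto. split; [intro E; subst; apply HK, inK_lam|].
    intro Hlit. destruct c as [u|l|w]; simpl in Hlit; try contradiction.
    pose proof Hk as Hk'. destruct Hk' as [HM [Ha H3]].
    destruct Hd as [Hd|[Hd|[tA [HA [Ht3 [_ Hn]]]]]].
    + apply H3. exists v, l. split; auto. left; auto.
    + apply H3. exists v, l. split; auto. right; left; auto.
    + destruct (witness m tA l Hk HA (or_intror (ex_intro _ v (conj Ht3 Hc)))) as [tS [HT Hp]].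
      destruct Hp as [Hp|Hp].
      * apply HK. right; left. rewrite <- Hp. destruct HT as [HS _].
        apply (const_in_consts tS SG 3); auto; [unfold I3; auto|simpl; rewrite Hp; exact I].
      * apply Hn. exists tS. split; auto. apply L_T; auto. right; left; auto.
Qed.

End Main.


Lemma D_of_delta {U L V : Type} (SG : list (@tp U L V)) SD A C lam G M adm fresh m tC tS v :
  kept SG SD A C lam G M adm m -> In tC C -> subst_tp lam fresh m tC tS ->
  occurs_in_tp (TV v) tC -> m v = Some (TU lam) -> deltaM SG SD A C lam G adm m v ->
  outD SG SD A C lam G M adm fresh (fresh m v).
Proof.
  intros Hk HC Hs Hocc Hm Hd. right. exists m. split; auto. exists v. split; auto.
  assert (Hsv : subst_term lam fresh m (TV v) (TV (fresh m v))).
  { right; left. exists v. auto. }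
  split; auto.
  exists tS. split.
  - right. exists m. split; auto. exists tC. auto.
  - apply occurs_comp. apply occurs_comp in Hocc. destruct Hocc as [i [Hi Hv]].
    exists i. split; auto. pose proof (proj1 (subst_tp_comp _ _ _ _ _) Hs i Hi) as H.
    rewrite Hv in H. symmetry. eapply subst_fun; eauto.
Qed.

Theorem theorem1 (U L V : Type) (SG : list (@tp U L V)) (SD : V -> Prop)
  (A C : list (@tp U L V)) (lam : U)
  (fresh_s fresh_c : @mapping U L V -> V -> V) :
  wf_schema SG SD ->
  wf_rule A C ->
  lam_fresh SG A C lam ->
  fresh_ok_score SG A C lam fresh_s ->
  fresh_ok_critical SG SD A C lam fresh_c ->
  forall I : list (@tp U L V),
    instance (score_G SG SD A C lam fresh_s) (score_D SG SD A C lam fresh_s) I <->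
    instance (critical_G SG SD A C lam fresh_c) (critical_D SG SD A C lam fresh_c) I.
Proof.
  intros Hsch Hrule Hlam Hfs Hfc I.
  assert (HvC : forall tC v, In tC C -> occurs_in_tp (TV v) tC -> in_vars v A).
  { intros tC v HC Ho. apply (varsC_A A C Hrule). exists tC; auto. }
  assert (HSGs : forall x, in_vars x SG -> critical_D SG SD A C lam fresh_c x ->
                   score_D SG SD A C lam fresh_s x).
  { intros x Hx Hd. left. eapply outD_SG; eauto.
    intros m Hm. split; [destruct Hm; auto|]. intros w. destruct Hfc as [_ [_ Hn]].
    apply (Hn m w Hm). }
  assert (HSGc : forall x, in_vars x SG -> score_D SG SD A C lam fresh_s x ->
                   critical_D SG SD A C lam fresh_c x).
  { intros x Hx Hd. left. eapply outD_SG; eauto.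
    intros m Hm. split; [destruct Hm; auto|]. intros w. destruct Hfs as [_ [_ Hn]].
    apply (Hn m w Hm). }
  split; intros [Hg HI]; split; auto; intros t Ht;
    assert (Hwf : wf_triple t) by (eapply Forall_forall; eauto);
    destruct (HI t Ht) as [tS [HG Hmod]].
  - destruct HG as [HS|[m [Hk [tC [HC Hs]]]]].
    + exists tS. split; [left; auto|]. eapply models_mono; eauto.
      * intros x Hx Hd. apply HSGs; auto. exists tS; auto.
      * intros i Hi. apply wf_comp; auto.
    + destruct (kept_facts SG SD A C lam m Hk) as [Hmap [Hdom Hsp]].
      pose proof (S2C_kept SG SD A C lam Hsch Hrule Hlam m Hk) as Hk'.
      destruct (transfer lam fresh_s fresh_c m (mp SG A lam m)
                  (score_D SG SD A C lam fresh_s) (critical_D SG SD A C lam fresh_c)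
                  tC tS t Hs Hmod Hwf Hmap) as [t2 [Hs2 Hmod2]].
      * destruct Hk' as [[Hm _] _]; auto.
      * intros v Ho. destruct (mp_spec SG A lam m v Hmap (HvC tC v HC Ho)) as [c [E _]]. congruence.
      * intros v Ho Hne. destruct (mp_spec SG A lam m v Hmap (HvC tC v HC Ho)) as [c [E _]].
        rewrite E in *. apply mp_nonlam with (SG := SG) (A := A) (lam := lam); auto.
        intro; subst; auto.
      * intros v Ho Hmp HD.
        assert (Hd : deltaM SG SD A C lam (critical_instance SG SD A lam) (fun tA tq => tq = tA) (mp SG A lam m) v).
        { apply (outD_fresh SG SD A C lam Hsch Hrule (critical_instance SG SD A lam) (eval A (critical_instance SG SD A lam)) (fun tA tq => tq = tA) fresh_c (mp SG A lam m) v Hfc); eauto.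
          - intros m' [Hm' _]; auto.
          - destruct Hk' as [HM _]; exact HM. }
        destruct (S2C_H2 SG SD A C lam Hsch Hrule Hlam m v Hk (HvC tC v HC Ho) Hmp Hd)
          as [[Hm1 Hd1]|Hc]; [left|right; auto].
        split; auto.
        exact (D_of_delta SG SD A C lam (sandbox SG lam) (evalQ A lam (sandbox SG lam)) (rewriting lam) fresh_s m tC tS v Hk HC Hs Ho Hm1 Hd1).
      * intros v w Hv Hw E. destruct Hfc as [_ [Hinj _]].
        destruct Hk' as [HM _].
        exact (proj2 (Hinj _ _ v w HM HM (HvC tC v HC Hv) (HvC tC w HC Hw) E)).
      * exists t2. split; auto. right. exists (mp SG A lam m). split; auto. exists tC. auto.
  - destruct HG as [HS|[m [Hk [tC [HC Hs]]]]].
    + exists tS. split; [left; auto|]. eapply models_mono; eauto.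
      * intros x Hx Hd. apply HSGc; auto. exists tS; auto.
      * intros i Hi. apply wf_comp; auto.
    + pose proof (C2S_kept SG SD A C lam m Hk) as Hk'.
      assert (Hmap : is_mapping m) by (destruct Hk as [[Hm _] _]; auto).
      assert (HMs : evalQ A lam (sandbox SG lam) m) by (destruct Hk' as [HM _]; auto).
      destruct (transfer lam fresh_c fresh_s m m
                  (critical_D SG SD A C lam fresh_c) (score_D SG SD A C lam fresh_s)
                  tC tS t Hs Hmod Hwf Hmap Hmap) as [t2 [Hs2 Hmod2]].
      * intros v Ho. destruct Hk as [[_ [Hdom _]] _]. apply Hdom. eauto.
      * auto.
      * intros v Ho Hmp HD. left. split; auto.
        assert (Hd : deltaM SG SD A C lam (sandbox SG lam) (rewriting lam) m v).
        { apply (outD_fresh SG SD A C lam Hsch Hrule (sandbox SG lam) (evalQ A lam (sandbox SG lam)) (rewriting lam) fresh_s m v Hfs); eauto.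
          intros m' [Hm' _]; auto. }
        apply (D_of_delta SG SD A C lam (critical_instance SG SD A lam) (eval A (critical_instance SG SD A lam)) (fun tA tq => tq = tA) fresh_c m tC tS v Hk HC Hs Ho Hmp).
        apply C2S_delta; auto.
      * intros v w Hv Hw E. destruct Hfs as [_ [Hinj _]].
        exact (proj2 (Hinj _ _ v w HMs HMs (HvC tC v HC Hv) (HvC tC w HC Hw) E)).
      * exists t2. split; auto. right. exists m. split; auto. exists tC. auto.
Qed.
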